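(* Let $\mathbb T=(V,E,o)$ be a locally finite rooted tree (edges directed away from the root) with rates satisfying a flow rule for a flow of strength $q>0$, and assume that particles are generated at the root at rate $\lambda=\rho q$ for some $\rho\in(0,1)$. Then the Bernoulli-$\rho$ product measure $\nu_\rho$ on $\{0,1\}^V$ is an invariant measure for the TASEP $(\eta_t)_{t\ge0}$ on $\mathbb T$, i.e. $\int\mathcal Lf\,d\nu_\rho=0$ for all cylinder functions $f$.
   Context: The TASEP on $\mathbb T$ with rates $(r_{x,y})_{(x,y)\in E}$ (positive, uniformly bounded above) and reservoir intensity $\lambda$ has generator $\mathcal Lf(\eta)=\lambda(1-\eta(o))[f(\eta^o)-f(\eta)]+\sum_{(x,y)\in E}r_{x,y}\eta(x)(1-\eta(y))[f(\eta^{x,y})-f(\eta)]$, where $\eta^{x,y}$ swaps the values at $x,y$ and $\eta^o$ flips the value at $o$. $r_x:=\sum_{y:(x,y)\in E}r_{x,y}$; $\bar x$ is the parent of $x\ne o$. Flow rule of strength $q$: $r_x-r_{\bar x,x}=0$ for all $x\ne o$ and $r_o=q$. *)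

(* Defs.v *)
From Stdlib Require Import Relations.
From mathcomp Require Import all_boot all_order all_algebra.
From mathcomp Require Import boolp classical_sets fsbigop reals.
Set Implicit Arguments. Unset Strict Implicit. Unset Printing Implicit Defensive.
Import Order.TTheory GRing.Theory Num.Theory.
Local Open Scope classical_set_scope.
Local Open Scope ring_scope.

Definition config (V : Type) := V -> bool.

Definition is_rooted_tree (V : Type) (E : V -> V -> Prop) (o : V) : Prop :=
  (forall x, ~ E x o) /\
  (forall y, y <> o -> exists! x, E x y) /\
  (forall y, clos_refl_trans V E o y).

(* Locally finite: every vertex has finitely many children
   (it has at most one parent by the tree property). *)
Definition locally_finite (V : eqType) (E : V -> V -> Prop) : Prop :=
  forall x, exists s : seq V, forall y, E x y -> y \in s.

Definition out_rate (R : realType) (V : choiceType) (E : V -> V -> Prop)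
  (r : V -> V -> R) (x : V) : R :=
  \sum_(y \in [set y | E x y]) r x y.

Definition flow_rule (R : realType) (V : choiceType) (E : V -> V -> Prop)
  (o : V) (r : V -> V -> R) (q : R) : Prop :=
  (forall x y, E y x -> out_rate E r x = r y x) /\ out_rate E r o = q.

Definition swap_cfg (V : eqType) (x y : V) (eta : config V) : config V :=
  fun z => if z == x then eta y else if z == y then eta x else eta z.

Definition flip_cfg (V : eqType) (o : V) (eta : config V) : config V :=
  fun z => if z == o then ~~ eta o else eta z.

Definition b2R (R : realType) (b : bool) : R := (b : nat)%:R.

(* The sum over the edge set is the (finitely supported)
   sum over edges of the nonzero terms; for cylinder functions on a locally
   finite tree only finitely many terms are nonzero. *)
Definition tasep_gen (R : realType) (V : choiceType) (E : V -> V -> Prop)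
  (o : V) (r : V -> V -> R) (lam : R) (f : config V -> R) (eta : config V) : R :=
  lam * (1 - b2R R (eta o)) * (f (flip_cfg o eta) - f eta)
  + \sum_(e \in [set e : V * V | E e.1 e.2])
      (r e.1 e.2 * b2R R (eta e.1) * (1 - b2R R (eta e.2))
        * (f (swap_cfg e.1 e.2 eta) - f eta)).

Definition depends_only_on (V : eqType) (R : Type) (S : seq V)
  (g : config V -> R) : Prop :=
  forall eta eta', (forall v, v \in S -> eta v = eta' v) -> g eta = g eta'.

Definition cylinder (V : eqType) (R : Type) (g : config V -> R) : Prop :=
  exists S : seq V, depends_only_on S g.

(* the configuration equal to t on S (listed without repetition) and 0 elsewhere *)
Definition ext_cfg (V : eqType) (S : seq V) (t : (size S).-tuple bool) : config V :=
  fun v => if v \in S then nth false t (index v S) else false.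

(* Integral against the Bernoulli-rho product measure nu_rho of a function
   depending only on the coordinates in the duplicate-free list S:
   the sum over the 2^|S| patterns on S weighted by their nu_rho-probability
   (nu_rho is, by definition, the measure with these finite-dim. marginals). *)
Definition bern_int (R : realType) (V : eqType) (rho : R) (S : seq V)
  (g : config V -> R) : R :=
  \sum_(t : (size S).-tuple bool)
     (\prod_(i < size S) (if tnth t i then rho else 1 - rho)) * g (ext_cfg t).

(* Main.v *)
Require Import Defs.
From Stdlib Require Import Relations.
From mathcomp Require Import all_boot all_order all_algebra.
From mathcomp Require Import boolp classical_sets fsbigop reals.
From mathcomp Require Import ring lra.
Set Implicit Arguments. Unset Strict Implicit. Unset Printing Implicit Defensive.
Import Order.TTheory GRing.Theory Num.Theory.
Local Open Scope ring_scope.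

Section ExSec.
Variables (R : realType) (V : choiceType) (rho : R).

Definition upd (z : config V) (x : V) (b : bool) : config V :=
  fun v => if v == x then b else z v.

Definition Aop (x : V) (F : config V -> R) : config V -> R :=
  fun z => rho * F (upd z x true) + (1 - rho) * F (upd z x false).

Fixpoint Ex (L : seq V) (F : config V -> R) : config V -> R :=
  if L is x :: L' then Ex L' (Aop x F) else F.

Definition indep (x : V) (F : config V -> R) := forall z b, F (upd z x b) = F z.

Lemma upd_comm z x y b c : x != y -> upd (upd z x b) y c = upd (upd z y c) x b.
Proof.
move=> nxy; apply: funext => v; rewrite /upd.
case: eqP => [->|//]; case: eqP => [exy|//].
by rewrite exy eqxx in nxy.
Qed.

Lemma upd_upd z x b c : upd (upd z x b) x c = upd z x c.
Proof. by apply: funext => v; rewrite /upd; case: (v == x). Qed.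

Lemma Aop_comm x y F : Aop x (Aop y F) = Aop y (Aop x F).
Proof.
case: (eqVneq x y) => [->//|nxy]; apply: funext => z; rewrite /Aop.
rewrite !(upd_comm _ _ _ nxy); ring.
Qed.

Lemma Aop_indep x F : indep x F -> Aop x F = F.
Proof. by move=> h; apply: funext => z; rewrite /Aop !h; ring. Qed.

Lemma indep_Aop x F : indep x (Aop x F).
Proof. by move=> z b; rewrite /Aop !upd_upd. Qed.

Lemma Ex_Aop L x F : Ex L (Aop x F) = Aop x (Ex L F).
Proof.
elim: L F => [//|y L IH] F /=.
by rewrite Aop_comm IH.
Qed.

Lemma Ex_indep_mem L F s : s \in L -> indep s (Ex L F).
Proof.
elim: L F => [//|x L IH] F; rewrite in_cons => /orP[/eqP->|sL] /=.
  by rewrite Ex_Aop; apply: indep_Aop.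
exact: IH.
Qed.

Lemma Ex_all_indep L F : (forall x, indep x F) -> Ex L F = F.
Proof.
move=> h; elim: L => [//|x L IH] /=.
by rewrite Aop_indep.
Qed.

Lemma Ex_comm L1 L2 F : Ex L1 (Ex L2 F) = Ex L2 (Ex L1 F).
Proof.
elim: L2 F => [//|x L2 IH] F /=.
by rewrite IH Ex_Aop.
Qed.

Lemma Ex_mem_A L x F : x \in L -> Ex L (Aop x F) = Ex L F.
Proof. by move=> xL; rewrite Ex_Aop Aop_indep //; apply: Ex_indep_mem. Qed.

Lemma Ex_add L F G : Ex L (fun z => F z + G z) = fun z => Ex L F z + Ex L G z.
Proof.
elim: L F G => [//|x L IH] F G /=.
have -> : Aop x (fun z => F z + G z) = fun z => Aop x F z + Aop x G z.
  by apply: funext => z; rewrite /Aop; ring.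
exact: IH.
Qed.

Lemma Ex_scale L c F : Ex L (fun z => c * F z) = fun z => c * Ex L F z.
Proof.
elim: L F => [//|x L IH] F /=.
have -> : Aop x (fun z => c * F z) = fun z => c * Aop x F z.
  by apply: funext => z; rewrite /Aop; ring.
exact: IH.
Qed.

Lemma Ex_zero L : Ex L (fun _ => 0) = fun _ => 0.
Proof. by apply: Ex_all_indep. Qed.

Lemma Ex_sum (I : Type) L (s : seq I) (F : I -> config V -> R) :
  Ex L (fun z => \sum_(i <- s) F i z) = fun z => \sum_(i <- s) Ex L (F i) z.
Proof.
elim: s => [|i s IH].
  under eq_fun do rewrite big_nil.
  by rewrite Ex_zero; apply: funext => z; rewrite big_nil.
under eq_fun do rewrite big_cons.
by rewrite Ex_add IH; apply: funext => z; rewrite big_cons.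
Qed.

Lemma Ex_ext L F G : F =1 G -> Ex L F = Ex L G.
Proof. by move=> /funext ->. Qed.

Lemma dep_Aop (S : seq V) x F : depends_only_on S F -> depends_only_on S (Aop x F).
Proof.
move=> h z z' hz; rewrite /Aop; congr (_ * _ + _ * _); apply: h => v vS;
by rewrite /upd; case: ifP => // _; apply: hz.
Qed.

Lemma dep_Ex (S : seq V) L F : depends_only_on S F -> depends_only_on S (Ex L F).
Proof.
elim: L F => [//|x L IH] F h /=; apply: IH; exact: dep_Aop.
Qed.

Lemma dep_indep (S : seq V) F x : depends_only_on S F -> x \notin S -> indep x F.
Proof.
move=> h xS z b; apply: h => v vS; rewrite /upd; case: eqP => // ev.
by move: xS; rewrite -ev vS.
Qed.

Lemma tuple_sum n (F : n.+1.-tuple bool -> R) :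
  \sum_(t : n.+1.-tuple bool) F t =
  \sum_(b : bool) \sum_(t : n.-tuple bool) F [tuple of b :: t].
Proof.
rewrite pair_bigA /=.
rewrite (reindex (fun p : bool * n.-tuple bool => [tuple of p.1 :: p.2])) //.
exists (fun t : n.+1.-tuple bool => (thead t, [tuple of behead t])).
  by move=> [b t] _ /=; congr pair; apply: val_inj.
move=> t _; apply: val_inj => /=.
by case: t => [[|x s]] //.
Qed.

Lemma ext_cfg_cons (s : V) (S : seq V) b (t : (size S).-tuple bool) :
  @ext_cfg V (s :: S) [tuple of b :: t] = upd (ext_cfg t) s b.
Proof.
apply: funext => v; rewrite /ext_cfg /upd in_cons /=.
case: (eqVneq v s) => [->|nvs] //=.
Qed.

Lemma bern_int_lin (S : seq V) (F G : config V -> R) a c :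
  bern_int rho S (fun z => a * F z + c * G z) =
  a * bern_int rho S F + c * bern_int rho S G.
Proof.
rewrite /bern_int !mulr_sumr -big_split /=; apply: eq_bigr => t _; ring.
Qed.

Lemma bern_int_Ex (S : seq V) (g : config V -> R) :
  bern_int rho S g = Ex S g (fun _ => false).
Proof.
elim: S g => [|s S IH] g.
  rewrite /bern_int /= (eq_bigl (pred1 [tuple])); last first.
    by move=> t; apply/esym/eqP; rewrite tuple0.
  rewrite big_pred1_eq big_ord0 mul1r.
  by congr g; apply: funext => v.
rewrite /= -IH /Aop bern_int_lin.
rewrite /bern_int /= tuple_sum big_bool /= !mulr_sumr -big_split /=.
rewrite -[in RHS]big_split /=; apply: eq_bigr => t _.
rewrite !big_ord_recl !tnth0 !ext_cfg_cons.
have hp b : \prod_(i < size S) (if tnth [tuple of b :: t] (lift ord0 i) then rho else 1 - rho)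
   = \prod_(i < size S) (if tnth t i then rho else 1 - rho).
  by apply: eq_bigr => i _; rewrite tnthS.
rewrite !hp /=.
ring.
Qed.


Lemma sum_pick (T : eqType) (U : seq T) (k : T) (a : R) :
  uniq U -> \sum_(v <- U) (if k == v then a else 0) = if k \in U then a else 0.
Proof.
move=> uU; rewrite -big_mkcond big_const_seq.
have -> : count (fun v => k == v) U = count_mem k U.
  by apply: eq_count => v; rewrite eq_sym.
rewrite count_uniq_mem //; case: (k \in U) => /=; by rewrite ?addr0.
Qed.

Lemma b2R1 : b2R R true = 1. Proof. by []. Qed.
Lemma b2R0 : b2R R false = 0. Proof. by []. Qed.

Lemma upd_at z x b : upd z x b x = b.
Proof. by rewrite /upd eqxx. Qed.

Lemma upd_at2 z x y b c : x != y -> upd (upd z x b) y c x = b.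
Proof. by move=> nxy; rewrite /upd (negbTE nxy) eqxx. Qed.

Lemma root_lemma (o : V) (q : R) (f : config V -> R) :
  Aop o (fun z => rho * q * (1 - b2R R (z o)) * (f (flip_cfg o z) - f z)) =
  Aop o (fun z => q * (b2R R (z o) - rho) * f z).
Proof.
apply: funext => z; rewrite /Aop !upd_at b2R1 b2R0.
have -> : flip_cfg o (upd z o false) = upd z o true.
  by apply: funext => v; rewrite /flip_cfg /upd eqxx; case: (v == o).
ring.
Qed.

Lemma edge_lemma (x y : V) (rr : R) (f : config V -> R) :
  Aop x (Aop y (fun z => rr * b2R R (z x) * (1 - b2R R (z y)) * (f (swap_cfg x y z) - f z))) =
  Aop x (Aop y (fun z => rr * (b2R R (z y) - b2R R (z x)) * f z)).
Proof.
case: (eqVneq x y) => [<-|nxy].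
  congr (Aop x (Aop x _)); apply: funext => z.
  case: (z x); rewrite ?b2R1 ?b2R0; ring.
apply: funext => z; rewrite /Aop !upd_at !upd_at2 // ?b2R1 ?b2R0.
have -> : swap_cfg x y (upd (upd z x true) y false) = upd (upd z x false) y true.
  apply: funext => v; rewrite /swap_cfg /upd.
  case: (eqVneq v x) => [->|nvx]; first by rewrite (negbTE nxy) eqxx.
  by rewrite (negbTE nxy) eqxx; case: (v == y).
ring.
Qed.

Lemma phi_zero (v : V) (f : config V -> R) :
  indep v f -> Aop v (fun z => (b2R R (z v) - rho) * f z) = fun _ => 0.
Proof.
move=> h; apply: funext => z; rewrite /Aop !upd_at !h b2R1 b2R0; ring.
Qed.


Lemma exch (I T : eqType) (s : seq I) (U : seq T) (k : I -> T) (h : I -> R) :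
  uniq U -> (forall i, i \in s -> k i \notin U -> h i = 0) ->
  \sum_(i <- s) h i = \sum_(v <- U) \sum_(i <- s | k i == v) h i.
Proof.
move=> uU hk.
under [RHS]eq_bigr do rewrite big_mkcond.
rewrite exchange_big /= big_seq [RHS]big_seq; apply: eq_bigr => i iS.
rewrite sum_pick //; case: ifP => // kU; rewrite hk //; by rewrite kU.
Qed.

End ExSec.

Unset Implicit Arguments.

Theorem mainTheorem4 (R : realType) (V : choiceType) (E : V -> V -> Prop) (o : V)
  (r : V -> V -> R) (q rho : R) :
  is_rooted_tree E o ->
  locally_finite E ->
  (forall x y, E x y -> 0 < r x y) ->
  (exists C : R, forall x y, E x y -> r x y <= C) ->
  flow_rule E o r q ->
  0 < q ->
  0 < rho < 1 ->
  forall f : config V -> R, cylinder f ->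
    cylinder (tasep_gen E o r (rho * q) f) /\
    (forall S : seq V, uniq S -> depends_only_on S (tasep_gen E o r (rho * q) f) ->
       bern_int rho S (tasep_gen E o r (rho * q) f) = 0).
Proof.
move=> [noo [upar reach]] lf rpos _ [fin fro] q0 /andP[r0 r1] f [S0 hS0].
have [Ch hCh] : exists Ch : seq V, forall x y, x \in S0 -> E x y -> y \in Ch.
  elim: (S0) => [|a S IH]; first by exists [::].
  case: IH => C hC; case: (lf a) => sa hsa; exists (sa ++ C) => x y.
  rewrite in_cons mem_cat => /orP[/eqP->|xS] exy; first by rewrite (hsa y exy).
  by rewrite (hC x y xS exy) orbT.
have [Pa hPa] : exists P : seq V, forall x y, y \in S0 -> E x y -> x \in P.
  elim: (S0) => [|a S IH]; first by exists [::].
  case: IH => P hP.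
  have [pa hpa] : exists pa : seq V, forall x, E x a -> x \in pa.
    case: (eqVneq a o) => [->|nao]; first by exists [::] => x /noo.
    have [p [_ hp]] := upar a (elimN eqP nao).
    by exists [:: p] => x /hp ->; rewrite mem_seq1.
  exists (pa ++ P) => x y; rewrite in_cons mem_cat => /orP[/eqP->|yS] exy.
    by rewrite (hpa x exy).
  by rewrite (hP x y yS exy) orbT.
set N := o :: S0 ++ Ch ++ Pa.
set N' := undup N.
set ED := [seq e <- [seq (x, y) | x <- N', y <- N'] |
            `[< E e.1 e.2 >] && ((e.1 \in S0) || (e.2 \in S0))].
have uED : uniq ED.
  apply: filter_uniq; apply: allpairs_uniq; rewrite ?undup_uniq //.
  by move=> [a b] [c d] _ _ [-> ->].
have memED : forall e, e \in ED ->
    [/\ E e.1 e.2, e.1 \in N, e.2 \in N & (e.1 \in S0) || (e.2 \in S0)].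
  move=> e; rewrite mem_filter => /andP[/andP[/asboolP he hS] /allpairsP[[a b] [ha hb eab]]].
  subst e; move: ha hb; rewrite /N' !mem_undup /= => ha hb.
  by split.
have EDmem : forall x y, E x y -> (x \in S0) || (y \in S0) -> (x, y) \in ED.
  move=> x y exy hxy; rewrite mem_filter /= hxy andbT; apply/andP; split.
    by apply/asboolP.
  have [xN yN] : x \in N /\ y \in N.
    case/orP: hxy => h.
      by rewrite !in_cons !mem_cat h (hCh x y h exy) !orbT.
    by rewrite !in_cons !mem_cat h (hPa x y h exy) !orbT.
  by apply: allpairs_f; rewrite mem_undup.
have S0N : forall v, v \in S0 -> v \in N.
  by move=> v vS; rewrite in_cons mem_cat vS orbT.
have oN : o \in N by rewrite mem_head.
pose Root := fun z : config V => rho * q * (1 - b2R R (z o)) * (f (flip_cfg o z) - f z).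
pose T := fun (e : V * V) (z : config V) => r e.1 e.2 * b2R R (z e.1) * (1 - b2R R (z e.2))
   * (f (swap_cfg e.1 e.2 z) - f z).
have Gform : tasep_gen E o r (rho * q) f = fun z => Root z + \sum_(e <- ED) T e z.
  apply: funext => z; rewrite /tasep_gen; congr (_ + _).
  rewrite (fsbigE ED) //.
  - rewrite big_seq_cond [RHS]big_seq; apply: eq_bigl => e.
    case eED: (e \in ED) => //=; apply/mem_set.
    by case: (memED e eED).
  - by move=> e /= eED; case: (memED e eED).
  move=> [a b] /= hab nab.
  rewrite (hS0 (swap_cfg a b z) z) ?subrr ?mulr0 //.
  move=> v vS; rewrite /swap_cfg.
  case: (eqVneq v a) => [eva|nva].
    by move: nab; rewrite EDmem // -eva vS.
  case: (eqVneq v b) => [evb|//].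
  by move: nab; rewrite EDmem // -evb vS orbT.
have depG : depends_only_on N (tasep_gen E o r (rho * q) f).
  rewrite Gform => z z' hz.
  have fzz : f z = f z' by apply: hS0 => v /S0N /hz.
  congr (_ + _).
    rewrite /Root (hz o oN) fzz (hS0 (flip_cfg o z) (flip_cfg o z')) //.
    by move=> v /S0N vN; rewrite /flip_cfg (hz o oN) hz.
  apply: eq_big_seq => e eED; case: (memED e eED) => _ h1 h2 _.
  rewrite /T (hz _ h1) (hz _ h2) fzz (hS0 (swap_cfg e.1 e.2 z) (swap_cfg e.1 e.2 z')) //.
  by move=> v /S0N vN; rewrite /swap_cfg (hz _ h1) (hz _ h2) hz.
split; first by exists N.
move=> S _ hS; rewrite bern_int_Ex.
suff EN0 : Ex rho N (tasep_gen E o r (rho * q) f) = fun _ => 0.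
  have ind : forall x, indep x (Ex rho S (tasep_gen E o r (rho * q) f)).
    move=> x; case xS: (x \in S); first exact: Ex_indep_mem.
    by apply: (dep_indep (S:=S)); [exact: dep_Ex | rewrite xS].
  by rewrite -(Ex_all_indep rho N ind) Ex_comm EN0 Ex_zero.
rewrite Gform Ex_add Ex_sum.
have ER : Ex rho N Root = Ex rho N (fun z => q * (b2R R (z o) - rho) * f z).
  by rewrite -(Ex_mem_A rho Root oN) root_lemma Ex_mem_A.
have ET : forall e, e \in ED -> Ex rho N (T e) =
    Ex rho N (fun z => r e.1 e.2 * (b2R R (z e.2) - b2R R (z e.1)) * f z).
  move=> e eED; case: (memED e eED) => _ h1 h2 _.
  rewrite -(Ex_mem_A rho (T e) h2) -(Ex_mem_A rho _ h1) edge_lemma.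
  by rewrite (Ex_mem_A rho _ h1) (Ex_mem_A rho _ h2).
pose phi v := Ex rho N (fun z => (b2R R (z v) - rho) * f z).
have phi0 : forall v, v \in N -> v \notin S0 -> phi v = fun _ => 0.
  move=> v vN vS; rewrite /phi -(Ex_mem_A rho _ vN) phi_zero ?Ex_zero //.
  exact: dep_indep hS0 vS.
have ERo : Ex rho N (fun z => q * (b2R R (z o) - rho) * f z) = fun z => q * phi o z.
  rewrite -Ex_scale; congr Ex; apply: funext => z; by rewrite mulrA.
have ETe : forall e, Ex rho N (fun z => r e.1 e.2 * (b2R R (z e.2) - b2R R (z e.1)) * f z)
    = fun z => r e.1 e.2 * (phi e.2 z - phi e.1 z).
  move=> e.
  have -> : (fun z => r e.1 e.2 * (b2R R (z e.2) - b2R R (z e.1)) * f z) =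
     (fun z => r e.1 e.2 * ((b2R R (z e.2) - rho) * f z + (-1) * ((b2R R (z e.1) - rho) * f z))).
    by apply: funext => z; ring.
  by rewrite Ex_scale Ex_add Ex_scale; apply: funext => z; rewrite /phi; ring.
rewrite ER ERo; apply: funext => z.
rewrite big_seq; under eq_bigr => e eED do rewrite (ET e eED) ETe.
rewrite -big_seq.
have ps0 : forall v, v \in N -> v \notin S0 -> phi v z = 0.
  by move=> v vN vS; rewrite (phi0 v vN vS).
have hin : \sum_(e <- ED) r e.1 e.2 * phi e.2 z =
    \sum_(v <- undup S0) phi v z * \sum_(e <- ED | e.2 == v) r e.1 e.2.
  rewrite (exch (s:=ED) (U:=undup S0) (k:=snd) (h:=fun e => r e.1 e.2 * phi e.2 z)) ?undup_uniq //.
    apply: eq_bigr => v _; rewrite mulr_sumr; apply: eq_bigr => e /eqP ->; by rewrite mulrC.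
  move=> i iED; rewrite mem_undup => iS; case: (memED i iED) => _ _ h2 _.
  by rewrite /= ps0 // mulr0.
have hout : \sum_(e <- ED) r e.1 e.2 * phi e.1 z =
    \sum_(v <- undup S0) phi v z * \sum_(e <- ED | e.1 == v) r e.1 e.2.
  rewrite (exch (s:=ED) (U:=undup S0) (k:=fst) (h:=fun e => r e.1 e.2 * phi e.1 z)) ?undup_uniq //.
    apply: eq_bigr => v _; rewrite mulr_sumr; apply: eq_bigr => e /eqP ->; by rewrite mulrC.
  move=> i iED; rewrite mem_undup => iS; case: (memED i iED) => _ h1 _ _.
  by rewrite /= ps0 // mulr0.
have hor : forall v, v \in S0 -> \sum_(e <- ED | e.1 == v) r e.1 e.2 = out_rate E r v.
  move=> v vS; rewrite /out_rate (fsbigE [seq e.2 | e <- ED & e.1 == v]).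
  - rewrite big_map big_filter_cond [LHS]big_seq_cond [RHS]big_seq_cond.
    apply: eq_big => [e|e /andP[_ /eqP->]] //.
    case eED: (e \in ED) => //=; case ev: (e.1 == v) => //=.
    apply/esym/mem_set; case: (memED e eED) => he _ _ _; by rewrite /= -(eqP ev).
  - rewrite map_inj_in_uniq; first exact: (filter_uniq _ uED).
    move=> [a b] [c d]; rewrite !mem_filter /= => /andP[/eqP-> _] /andP[/eqP-> _] ->.
    by [].
  - move=> y /= /mapP[e]; rewrite mem_filter => /andP[/eqP ev eED] ->.
    by case: (memED e eED) => he _ _ _; rewrite /= -ev.
  move=> y /= hy nin; exfalso; move/negP: nin; apply; apply/mapP; exists (v, y) => //.
  by rewrite mem_filter eqxx EDmem // vS.
have hrate : forall v, v \in S0 ->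
    \sum_(e <- ED | e.2 == v) r e.1 e.2 - \sum_(e <- ED | e.1 == v) r e.1 e.2
    = if v == o then - q else 0.
  move=> v vS; rewrite hor //.
  case: (eqVneq v o) => [->|nvo].
    rewrite fro big_seq_cond big1 ?sub0r // => e /andP[eED /eqP ev].
    by case: (memED e eED) => he _ _ _; move: he; rewrite ev => /noo.
  have [p [hp hu]] := upar v (elimN eqP nvo).
  rewrite (fin v p hp) big_seq_cond.
  rewrite (eq_bigl (pred1 (p, v))); last first.
    move=> [a b] /=; apply/andP/eqP.
      by move=> [abED /eqP ebv]; case: (memED _ abED) => /= he _ _ _; subst b; rewrite (hu a he).
    move=> [-> ->]; rewrite eqxx; split => //; apply: EDmem => //; by rewrite vS orbT.
  rewrite -big_filter filter_pred1_uniq ?big_seq1 ?subrr //.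
  by apply: EDmem => //; rewrite vS orbT.
rewrite (eq_bigr _ (fun e _ => mulrBr _ _ _)) sumrB hin hout -sumrB.
rewrite big_seq (eq_bigr (fun v => if o == v then - q * phi o z else 0)); last first.
  move=> v; rewrite mem_undup => vS; rewrite -mulrBr hrate //.
  case: (eqVneq v o) => [->|nvo]; rewrite ?eqxx ?mulr0 //; by rewrite mulrC.
rewrite -big_seq sum_pick ?undup_uniq // mem_undup.
case oS: (o \in S0); first by ring.
by rewrite ps0 ?oS //; ring.
Qed.
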